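(* Fix $m\ge 2$ and consider the game for SumLoss with top-1 feedback and binary relevance, as in the context. Let $\sigma_i,\sigma_j$ be two learner actions such that there is exactly one pair of objects $\{a,b\}$ whose positions differ in $\sigma_i$ and $\sigma_j$, with $a$ placed immediately before $b$ in $\sigma_i$ (i.e. $\sigma_i(b)=\sigma_i(a)+1$) and $b$ placed immediately before $a$ in $\sigma_j$ (i.e. $\sigma_j(a)=\sigma_j(b)+1$). Then $\sigma_i$ and $\sigma_j$ are neighboring actions.
   Context: Objects are $\{1,\dots,m\}$. Learner actions are the permutations $\sigma_1,\dots,\sigma_{m!}$ of $[m]$ ($\sigma(i)$ = rank of object $i$); adversary actions are the relevance vectors $r_1,\dots,r_{2^m}$ enumerating $\{0,1\}^m$. The loss matrix $L\in\mathbb{R}^{m!\times 2^m}$ has $L_{i,j}=\sum_{k=1}^m\sigma_i(k)r_j(k)$, with rows $\ell_i$. Let $\Delta=\{p\in\mathbb{R}^{2^m}:p_i\ge0,\sum_ip_i=1\}$ and $C_i=\{p\in\Delta:\ell_i\cdot p\le\ell_k\cdot p\ \forall k\}$. Action $i$ is Pareto-optimal if $C_i$ is non-empty and $(2^m-1)$-dimensional. Two Pareto-optimal actions $i,j$ are neighboring actions if $C_i\cap C_j$ is a $(2^m-2)$-dimensional polytope. *)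

(* Defs.v *)
From HB Require Import structures.
From mathcomp Require Import all_boot all_order all_algebra all_fingroup.
From mathcomp Require Import reals.
Set Implicit Arguments. Unset Strict Implicit. Unset Printing Implicit Defensive.
Import Order.TTheory GRing.Theory Num.Theory.
Local Open Scope ring_scope.

Section Game.
Variables (R : realType) (m : nat).

(* Objects are 'I_m (object k+1 of the paper is k).  A learner action is a
   permutation s : {perm 'I_m}; the rank of object k is (s k).+1 in {1..m}. *)
Definition rank (s : {perm 'I_m}) (k : 'I_m) : nat := (s k).+1.

(* Adversary actions: relevance vectors in {0,1}^m. *)
Definition relT := {ffun 'I_m -> bool}.
Definition N := #|{: relT}|.
Definition rel (j : 'I_N) : relT := enum_val j.

Definition loss (s : {perm 'I_m}) (r : relT) : R :=
  \sum_(k < m) (rank s k)%:R * (r k : nat)%:R.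

(* row ell_s of the loss matrix, columns indexed by the enumeration rel *)
Definition lossvec (s : {perm 'I_m}) : 'rV[R]_N := \row_j loss s (rel j).

Definition dotv (u v : 'rV[R]_N) : R := \sum_j u 0 j * v 0 j.

Definition simplex (p : 'rV[R]_N) : Prop :=
  (forall j, 0 <= p 0 j) /\ \sum_j p 0 j = 1.

Definition cell (s : {perm 'I_m}) (p : 'rV[R]_N) : Prop :=
  simplex p /\ forall t : {perm 'I_m}, dotv (lossvec s) p <= dotv (lossvec t) p.

(* Affine dimension of S is d: S contains x0 and x0 + (rows of D) with D having
   d linearly independent rows, and no larger affinely independent family exists.
   (This entails S nonempty.) *)
Definition affdim (S : 'rV[R]_N -> Prop) (d : nat) : Prop :=
  (exists x0, S x0 /\ exists D : 'M[R]_(d, N),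
      (forall i, S (x0 + row i D)) /\ row_free D) /\
  (forall x0 k (D : 'M[R]_(k, N)), S x0 -> (forall i, S (x0 + row i D)) ->
      row_free D -> (k <= d)%N).

Definition pareto_optimal (s : {perm 'I_m}) : Prop :=
  affdim (cell s) (2 ^ m - 1)%N.

(* C_s /\ C_t is always a polytope (intersection of the simplex with
   half-spaces), so only its dimension needs to be specified. *)
Definition neighbors (s t : {perm 'I_m}) : Prop :=
  [/\ pareto_optimal s, pareto_optimal t &
      affdim (fun p => cell s p /\ cell t p) (2 ^ m - 2)%N].

End Game.

(* Main.v *)
Require Import Defs.
From HB Require Import structures.
From mathcomp Require Import all_boot all_order all_algebra all_fingroup.
From mathcomp Require Import reals.
From mathcomp Require Import ring lra zify.
Set Implicit Arguments. Unset Strict Implicit. Unset Printing Implicit Defensive.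
Import Order.TTheory GRing.Theory Num.Theory.
Local Open Scope ring_scope.

Section Work.
Variables (R : realType) (m : nat).
Local Notation NN := (N m).
Local Notation rl := (@Defs.rel m).

Definition qv (p : 'rV[R]_NN) (k : 'I_m) : R :=
  \sum_j p 0 j * ((rl j k : nat)%:R).

Lemma dotv_qv (s : {perm 'I_m}) p :
  dotv (lossvec R s) p = \sum_k (rank s k)%:R * qv p k.
Proof.
rewrite /dotv; under eq_bigr do rewrite mxE /loss big_distrl.
rewrite exchange_big; apply: eq_bigr => k _; rewrite /qv big_distrr.
by apply: eq_bigr => j _ /=; ring.
Qed.

Lemma sum_lt_ord (n : nat) : (n <= m)%N -> (\sum_(i < m) ((i < n)%N : nat) = n)%N.
Proof.
move=> hn; rewrite -(big_mkord xpredT (fun i => ((i < n)%N : nat))).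
rewrite (big_cat_nat (n:=n)) //=.
rewrite [X in (_ + X)%N]big1_seq ?addn0; last first.
  by move=> i /andP[_]; rewrite mem_index_iota => /andP[h _]; rewrite ltnNge h.
rewrite (eq_big_nat _ _ (F2 := fun=> 1%N)); last by move=> i /andP[_ ->].
by rewrite sum_nat_const_nat subn0 muln1.
Qed.

Lemma cnt_perm (t : {perm 'I_m}) k : (t k : nat) = (\sum_l ((t l < t k)%N : nat))%N.
Proof.
rewrite -[RHS](@reindex_inj _ _ _ _ t xpredT (fun i => ((i < t k)%N : nat)) (@perm_inj _ t)) /=.
by rewrite sum_lt_ord // ltnW.
Qed.

Definition TT (t : {perm 'I_m}) (q : 'I_m -> R) :=
  \sum_k \sum_l ((t l < t k)%N)%:R * q k.

Lemma TT_eq (t : {perm 'I_m}) (q : 'I_m -> R) : \sum_k (t k : nat)%:R * q k = TT t q.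
Proof.
apply: eq_bigr => k _; rewrite {1}cnt_perm natr_sum mulr_suml.
by apply: eq_bigr => l _.
Qed.

Lemma TT2 (t : {perm 'I_m}) (q : 'I_m -> R) : TT t q + TT t q =
  \sum_k \sum_l (((t l < t k)%N)%:R * q k + ((t k < t l)%N)%:R * q l).
Proof.
rewrite {2}/TT exchange_big /= /TT -big_split /=.
by apply: eq_bigr => k _; rewrite -big_split.
Qed.

Lemma rearr (s t : {perm 'I_m}) (q : 'I_m -> R) :
  (forall k l, (s k < s l)%N -> q l <= q k) ->
  \sum_k (rank s k)%:R * q k <= \sum_k (rank t k)%:R * q k.
Proof.
move=> hq.
have E u : \sum_k (rank u k)%:R * q k = \sum_k q k + TT u q.
  rewrite -TT_eq -big_split; apply: eq_bigr => k _.
  by rewrite /= /rank -addn1 natrD; ring.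
rewrite !E lerD2l.
suff: TT s q + TT s q <= TT t q + TT t q by lra.
rewrite !TT2; apply: ler_sum => k _; apply: ler_sum => l _.
case: (ltngtP (s k) (s l)) => hs.
- have h := hq _ _ hs.
  case: (ltngtP (t k) (t l)) => ht; rewrite /= ?mulr1n ?mulr0n ?mul1r ?mul0r ?add0r ?addr0; try lra.
  have kl : k = l by apply: (@perm_inj _ t); apply: val_inj.
  by subst l; rewrite ltnn in hs.
- have h := hq _ _ hs.
  case: (ltngtP (t k) (t l)) => ht; rewrite /= ?mulr1n ?mulr0n ?mul1r ?mul0r ?add0r ?addr0; try lra.
  have kl : k = l by apply: (@perm_inj _ t); apply: val_inj.
  by subst l; rewrite ltnn in hs.
- have kl : k = l by apply: (@perm_inj _ s); apply: val_inj.
  by subst l; rewrite ltnn /= mulr0n mul0r add0r.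
Qed.


Lemma NN_eq : NN = (2 ^ m)%N.
Proof. by rewrite /N card_ffun card_bool card_ord. Qed.

Lemma NN_gt0 : (0 < NN)%N.
Proof. by rewrite NN_eq expn_gt0. Qed.

Lemma sum_rl (F : relT m -> R) : \sum_(j < NN) F (rl j) = \sum_(f : relT m) F f.
Proof. by rewrite (big_enum_val (A := {: relT m}) F). Qed.

Lemma cell_of_sorted (s : {perm 'I_m}) p : simplex p ->
  (forall k l, (s k < s l)%N -> qv p l <= qv p k) -> cell s p.
Proof. by move=> hp hq; split => // t; rewrite !dotv_qv; apply: rearr. Qed.

Definition GG (Q : 'I_m -> R) k (b : bool) := if b then Q k else 1 - Q k.

Definition pd (Q : 'I_m -> R) : 'rV[R]_NN := \row_j \prod_k GG Q k (rl j k).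

Lemma pd_sum Q : \sum_j pd Q 0 j = 1.
Proof.
under eq_bigr do rewrite mxE.
rewrite (sum_rl (fun f => \prod_k GG Q k (f k))) -bigA_distr_bigA /=.
by apply: big1 => k _; rewrite big_bool /GG /=; ring.
Qed.

Lemma prod_delta (F : 'I_m -> R) k0 : \prod_k (if k == k0 then F k else 1) = F k0.
Proof. by rewrite -big_mkcond big_pred1_eq. Qed.

Lemma pd_qv Q k0 : qv (pd Q) k0 = Q k0.
Proof.
rewrite /qv; under eq_bigr do rewrite mxE.
rewrite (sum_rl (fun f => (\prod_k GG Q k (f k)) * (f k0 : nat)%:R)).
have -> : \sum_(f : relT m) (\prod_k GG Q k (f k)) * (f k0 : nat)%:R =
  \sum_(f : relT m) \prod_k (GG Q k (f k) * (if k == k0 then (f k : nat)%:R else 1)).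
  by apply: eq_bigr => f _; rewrite big_split /= (prod_delta (fun k => (f k : nat)%:R)).
rewrite -(bigA_distr_bigA (fun k b => GG Q k b * (if k == k0 then (b : nat)%:R else 1))) /=.
rewrite -(prod_delta Q k0); apply: eq_bigr => k _.
rewrite big_bool /GG /=; case: (k == k0) => /=; ring.
Qed.

Lemma qvD p v k : qv (p + v) k = qv p k + qv v k.
Proof.
by rewrite /qv -big_split; apply: eq_bigr => j _; rewrite mxE mulrDl.
Qed.

Definition ee : R := (m.+2%:R)^-1.
Definition dl : R := ee ^+ m.+1 / (2 * NN)%:R.

Lemma ee_pos : 0 < ee.
Proof. by rewrite /ee invr_gt0 ltr0n. Qed.

Lemma ee_le1 : ee <= 1.
Proof. by rewrite /ee invf_le1 ?ltr0n // ler1n. Qed.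

Lemma dl_facts : [/\ 0 < dl, dl <= ee ^+ m & 2 * (NN%:R * dl) <= ee].
Proof.
have he := ee_pos; have he1 := ee_le1.
have hE : 0 < ee ^+ m by rewrite exprn_gt0.
have hE1 : ee ^+ m <= 1 by rewrite exprn_ile1 // ltW.
have hn : 1 <= NN%:R :> R by rewrite ler1n NN_gt0.
have hdl : dl * (2 * NN%:R) = ee * ee ^+ m.
  rewrite /dl -exprS natrM mulfVK //; rewrite mulf_neq0 // ?pnatr_eq0 //.
  by rewrite -lt0n NN_gt0.
have dpos : 0 < dl.
  by rewrite /dl divr_gt0 ?exprn_gt0 // ltr0n muln_gt0 NN_gt0.
split => //; nra.
Qed.


Definition Qh (h : 'I_m -> nat) k : R := 1 - ((h k)%:R + 1) * ee.

Lemma qv_bound (v : 'rV[R]_NN) k : (forall j, `|v 0 j| <= dl) -> `|qv v k| <= NN%:R * dl.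
Proof.
move=> hv; rewrite /qv; apply: le_trans (ler_norm_sum _ _ _) _.
apply: le_trans (_ : \sum_(j < NN) dl <= _).
  apply: ler_sum => j _; rewrite normrM; case: (rl j k) => /=.
    by rewrite normr1 mulr1.
  by rewrite normr0 mulr0 (le_trans _ (hv j)).
by rewrite sumr_const card_ord mulr_natl.
Qed.

Lemma interior (s : {perm 'I_m}) (h : 'I_m -> nat) (hlt : forall k, (h k < m)%N)
  (hmono : forall k l, (s k < s l)%N -> (h k <= h l)%N) (v : 'rV[R]_NN) :
  \sum_j v 0 j = 0 -> (forall j, `|v 0 j| <= dl) ->
  (forall k l, h k = h l -> qv v k = qv v l) -> cell s (pd (Qh h) + v).
Proof.
move=> hsum hv htie.
have [dpos dle dgap] := dl_facts.
have he := ee_pos.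
have hm2 : m.+2%:R * ee = 1 by rewrite /ee mulfV // pnatr_eq0.
have mm : (m.+2%:R : R) = m%:R + 2 by rewrite -addn2 natrD.
have hE : forall j, ee ^+ m <= pd (Qh h) 0 j.
  move=> j; rewrite mxE.
  have -> : ee ^+ m = \prod_(k < m) ee by rewrite prodr_const card_ord.
  apply: ler_prod => k _; rewrite (ltW he) /=.
  have y0 : 0 <= (h k)%:R :> R by rewrite ler0n.
  have ym : (h k)%:R <= m%:R :> R by rewrite ler_nat ltnW.
  rewrite /GG /Qh; case: (rl j k); nra.
split.
  split.
    move=> j; rewrite mxE; have := hv j; rewrite ler_norml => /andP[h1 _].
    have := hE j; lra.
  rewrite (eq_bigr (fun j => pd (Qh h) 0 j + v 0 j)); last by move=> j _; rewrite mxE.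
  by rewrite big_split /= pd_sum hsum addr0.
move=> t; rewrite !dotv_qv; apply: rearr => k l hkl.
rewrite !qvD !pd_qv.
have := hmono _ _ hkl; rewrite leq_eqVlt => /orP[/eqP e|lt].
  by rewrite /Qh e (htie _ _ e).
have := qv_bound k hv; have := qv_bound l hv; rewrite !ler_norml => /andP[a1 a2] /andP[b1 b2].
have : (h k)%:R + 1 <= (h l)%:R :> R.
  have : ((h k).+1%:R <= (h l)%:R :> R) by rewrite ler_nat.
  by rewrite -addn1 natrD.
rewrite /Qh; nra.
Qed.

Lemma affdim_of (S : 'rV[R]_NN -> Prop) r (C : 'M[R]_(NN, r)) (K : 'rV[R]_r) d x0 :
  \rank (kermx C) = d ->
  (forall x, S x -> x *m C = K) ->
  S x0 ->
  (forall v, v *m C = 0 -> (forall j, `|v 0 j| <= dl) -> S (x0 + v)) ->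
  affdim S d.
Proof.
move=> <- hK hx0 hin; have [dpos _ _] := dl_facts; split.
- exists x0; split => //.
  set B := row_base (kermx C).
  have BC : B *m C = 0 by apply/sub_kermxP; rewrite eq_row_base.
  set M := 1 + \sum_i \sum_j `|B i j|.
  have hB : forall i j, `|B i j| <= \sum_i \sum_j `|B i j|.
    move=> i j; rewrite (bigD1 i) //= (bigD1 j) //= -addrA lerDl.
    by rewrite addr_ge0 ?sumr_ge0 // => *; rewrite ?sumr_ge0.
  have M0 : 0 <= \sum_i \sum_j `|B i j| by rewrite sumr_ge0 // => *; rewrite sumr_ge0.
  have Mpos : 0 < M by rewrite /M; lra.
  exists ((dl / M) *: B); split.
  + move=> i; apply: hin.
      have -> : row i ((dl / M) *: B) = (dl / M) *: row i B.
        by apply/rowP => j; rewrite !mxE.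
      by rewrite -scalemxAl -row_mul BC row0 scaler0.
    move=> j; rewrite 2!mxE normrM (ger0_norm (_ : 0 <= dl / M)); last first.
      by rewrite divr_ge0 // ltW.
    rewrite mulrAC ler_pdivrMr // ler_pM2l //; have := hB i j; rewrite /M; lra.
  + rewrite /row_free mxrank_scale_nz; first exact: row_base_free.
    by rewrite mulf_neq0 ?invr_eq0 // gt_eqF.
- move=> y k D hy hrow hfree.
  have DC : D *m C = 0.
    apply/row_matrixP => i; rewrite row_mul row0.
    have h := hK _ (hrow i); rewrite mulmxDl (hK _ hy) in h.
    by rewrite -[LHS](addKr K) h addNr.
  rewrite -(eqP hfree); apply: mxrankS; exact/sub_kermxP.
Qed.


Lemma qv0 k : qv 0 k = 0.
Proof. by rewrite /qv big1 // => j _; rewrite mxE mul0r. Qed.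

Lemma interior0 (s : {perm 'I_m}) (h : 'I_m -> nat) (hlt : forall k, (h k < m)%N)
  (hmono : forall k l, (s k < s l)%N -> (h k <= h l)%N) : cell s (pd (Qh h)).
Proof.
rewrite -[pd _]addr0; apply: interior => //.
- by rewrite big1 // => j _; rewrite mxE.
- by move=> j; rewrite mxE normr0; have [] := dl_facts => /ltW.
- by move=> k l _; rewrite !qv0.
Qed.

Lemma mulC_entry r (v : 'rV[R]_NN) (C : 'M[R]_(NN, r)) c :
  v *m C = 0 -> \sum_j v 0 j * C j c = 0.
Proof. by move=> /matrixP/(_ 0 c); rewrite !mxE. Qed.

Lemma pareto (s : {perm 'I_m}) : pareto_optimal R s.
Proof.
pose C1 := const_mx 1 : 'M[R]_(NN, 1).
pose h := fun k : 'I_m => (s k : nat).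
have hlt : forall k, (h k < m)%N by move=> k; exact: ltn_ord.
apply: (@affdim_of _ 1 C1 (const_mx 1) _ (pd (Qh h))).
- rewrite mxrank_ker -NN_eq; congr (_ - _)%N.
  apply/eqP; rewrite eqn_leq rank_leq_col lt0n mxrank_eq0.
  apply/eqP => /matrixP/(_ (Ordinal NN_gt0) 0); rewrite !mxE => /eqP.
  by rewrite oner_eq0.
- move=> x [[_ hs] _]; apply/matrixP => i c; rewrite !mxE -hs.
  by apply: eq_bigr => j _; rewrite mxE mulr1 (ord1 i).
- by apply: (interior0 hlt) => k l /ltnW.
- move=> v vC hv; apply: (interior hlt) => //.
  + by move=> k l /ltnW.
  + by move: (mulC_entry 0 vC); under eq_bigr do rewrite mxE mulr1.
  + by move=> k l /val_inj/perm_inj ->.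
Qed.

Definition C2 (a b : 'I_m) : 'M[R]_(NN, 2) :=
  \matrix_(j < NN, c < 2) (if c == 0 then 1 else (rl j a : nat)%:R - (rl j b : nat)%:R).

Lemma sum_delta (F : 'I_NN -> R) j0 : \sum_j (j == j0)%:R * F j = F j0.
Proof.
rewrite (bigD1 j0) //= eqxx mul1r big1 ?addr0 // => j /negbTE ->.
by rewrite mul0r.
Qed.

Lemma ord2 (i : 'I_2) : i = 0 \/ i = 1.
Proof. case: i => [[|[|i]] hi]; [left|right|]; try by apply: val_inj. by []. Qed.

Lemma rank_C2 (a b : 'I_m) : a != b -> \rank (C2 a b) = 2%N.
Proof.
move=> hab.
pose j0 := enum_rank ([ffun => false] : relT m).
pose j1 := enum_rank ([ffun k => k == a] : relT m).
have r0 : rl j0 = [ffun => false] by rewrite /Defs.rel enum_rankK.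
have r1 : rl j1 = [ffun k => k == a] by rewrite /Defs.rel enum_rankK.
pose B2 := \matrix_(i < 2, j < NN)
  (if i == 0 then (j == j0)%:R else (j == j1)%:R - (j == j0)%:R) : 'M[R]_(2, NN).
have E : B2 *m C2 a b = 1%:M.
  apply/matrixP => i c; rewrite !mxE.
  under eq_bigr do rewrite !mxE.
  case: (i == 0) /eqP => [->|ni].
    rewrite (sum_delta (fun j => if c == 0 then 1 else (rl j a : nat)%:R - (rl j b : nat)%:R)).
    rewrite r0 !ffunE /=.
    by case: (ord2 c) => ->; rewrite /= ?mulr1n ?mulr0n ?subrr ?subr0.
  under eq_bigr do rewrite mulrBl.
  rewrite sumrB (sum_delta (fun j => if c == 0 then 1 else (rl j a : nat)%:R - (rl j b : nat)%:R)).
  rewrite (sum_delta (fun j => if c == 0 then 1 else (rl j a : nat)%:R - (rl j b : nat)%:R)).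
  rewrite r0 r1 !ffunE /= eqxx.
  have -> : (b == a) = false by apply/negbTE; rewrite eq_sym.
  case: (ord2 i) ni => -> // _; case: (ord2 c) => ->;
  by rewrite /= ?mulr1n ?mulr0n ?subrr ?subr0.
apply/eqP; rewrite eqn_leq rank_leq_col /=.
by rewrite -{1}(mxrank1 R 2) -E mxrankM_maxr.
Qed.


Section Inter.
Variables (si sj : {perm 'I_m}) (a b : 'I_m) (x : nat).
Hypotheses (hab : a != b) (hsa : si a = x :> nat) (hsb : si b = x.+1 :> nat)
  (hja : sj a = x.+1 :> nat) (hjb : sj b = x :> nat)
  (hoth : forall k, k != a -> k != b -> si k = sj k).

Lemma key k : (k = a) \/ (k = b) \/
  [/\ k != a, k != b, (si k : nat) = sj k, (si k : nat) <> x & (si k : nat) <> x.+1].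
Proof.
case: (eqVneq k a) => [->|ka]; first by left.
case: (eqVneq k b) => [->|kb]; first by right; left.
right; right; split => //; first by rewrite (hoth ka kb).
  by rewrite -hsa => /val_inj/perm_inj e; rewrite e eqxx in ka.
by rewrite -hsb => /val_inj/perm_inj e; rewrite e eqxx in kb.
Qed.

Lemma dot_diff (q : 'I_m -> R) :
  \sum_k (rank si k)%:R * q k - \sum_k (rank sj k)%:R * q k = q b - q a.
Proof.
rewrite -sumrB (bigD1 a) //= (bigD1 b) /=; last by rewrite eq_sym.
rewrite big1; last first.
  by move=> k /andP[ka kb]; rewrite /rank (hoth ka kb) subrr.
rewrite /rank hsa hsb hja hjb addr0 -!natr1; ring.
Qed.

Definition hmin (k : 'I_m) : nat := minn (si k) (sj k).

Lemma inter_cells (v : 'rV[R]_NN) : \sum_j v 0 j = 0 -> (forall j, `|v 0 j| <= dl) ->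
  qv v a = qv v b -> cell si (pd (Qh hmin) + v) /\ cell sj (pd (Qh hmin) + v).
Proof.
move=> hs hv hq.
have hlt : forall k, (hmin k < m)%N.
  by move=> k; rewrite /hmin; have := ltn_ord (si k); lia.
have tie : forall k l, hmin k = hmin l -> qv v k = qv v l.
  move=> k l; rewrite /hmin.
  case: (key k) => [->|[->|[ka kb e1 e2 e3]]]; case: (key l) => [->|[->|[la lb f1 f2 f3]]];
    rewrite ?hsa ?hsb ?hja ?hjb ?e1 ?f1 ?hq //; try (move=> *; lia).
  move=> e; have E : (si k : nat) = si l by rewrite e1 f1; lia.
  by move/val_inj/perm_inj: E => ->.
split; apply: (interior hlt) => // k l; rewrite /hmin;
  case: (key k) => [->|[->|[ka kb e1 e2 e3]]]; case: (key l) => [->|[->|[la lb f1 f2 f3]]];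
    rewrite ?hsa ?hsb ?hja ?hjb; lia.
Qed.

Lemma inter : affdim (fun p : 'rV[R]_NN => cell si p /\ cell sj p) (2 ^ m - 2).
Proof.
pose K2 := \row_(c < 2) (if c == 0 then 1 else 0) : 'rV[R]_2.
apply: (@affdim_of _ 2 (C2 a b) K2 _ (pd (Qh hmin))).
- by rewrite mxrank_ker -NN_eq rank_C2.
- move=> p [[[_ hs] ho1] [_ ho2]].
  have e1 := ho1 sj; have e2 := ho2 si; rewrite !dotv_qv in e1 e2.
  have := dot_diff (qv p) => hd.
  have hq : qv p a = qv p b by lra.
  apply/matrixP => i c; rewrite !mxE (ord1 i).
  under eq_bigr do rewrite mxE.
  case: (ord2 c) => -> /=.
    by rewrite -[RHS]hs; apply: eq_bigr => j _; rewrite mulr1.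
  under eq_bigr do rewrite mulrBr.
  by rewrite sumrB -/(qv p a) -/(qv p b) hq subrr.
- have := inter_cells (v := 0); rewrite addr0; apply.
  + by rewrite big1 // => j _; rewrite mxE.
  + by move=> j; rewrite mxE normr0; have [] := dl_facts => /ltW.
  + by rewrite !qv0.
- move=> v vC hv; apply: inter_cells => //.
  + by move: (mulC_entry 0 vC); under eq_bigr do rewrite mxE mulr1.
  + move: (mulC_entry 1 vC); under eq_bigr do rewrite mxE /= mulrBr.
    by rewrite sumrB => /eqP; rewrite subr_eq0 => /eqP.
Qed.

End Inter.

End Work.

Theorem lemma2 (R : realType) (m : nat) (hm : (2 <= m)%N)
  (si sj : {perm 'I_m}) (a b : 'I_m)
  (hother : forall k : 'I_m, k != a -> k != b -> si k = sj k)
  (hi : rank si b = (rank si a).+1)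
  (hj : rank sj a = (rank sj b).+1) :
  neighbors R si sj.
Proof.
move: hi hj; rewrite /rank => -[hi] [hj].
have hab : a != b by apply/eqP => e; rewrite e in hi; lia.
have H1 : exists k, sj k = si a.
  by exists ((sj^-1)%g (si a)); rewrite permKV.
have H2 : exists k, sj k = si b.
  by exists ((sj^-1)%g (si b)); rewrite permKV.
have cases_k : forall k, k = a \/ k = b \/ (k != a /\ k != b).
  move=> k; case: (eqVneq k a); first by left.
  by case: (eqVneq k b) => [|? ?]; [right; left|right; right].
have hx : sj b = si a :> nat.
  case: H1 => k1 e1; case: H2 => k2 e2.
  have o1 : k1 = a \/ k1 = b.
    case: (cases_k k1) => [|[|[ka kb]]]; try tauto.
    by move: e1; rewrite -(hother _ ka kb) => /perm_inj e; rewrite e eqxx in ka.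
  have o2 : k2 = a \/ k2 = b.
    case: (cases_k k2) => [|[|[ka kb]]]; try tauto.
    by move: e2; rewrite -(hother _ ka kb) => /perm_inj e; rewrite e eqxx in kb.
  move/(congr1 val): e1 => /= e1; move/(congr1 val): e2 => /= e2.
  case: o1 => E1; case: o2 => E2; rewrite ?E1 in e1; rewrite ?E2 in e2; lia.
split; [exact: pareto | exact: pareto |].
exact: (@inter R m si sj a b (si a) hab erefl hi (etrans hj (congr1 S hx)) hx hother).
Qed.
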